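(* Let $VB_n$ be the virtual braid group on $n$ strands. Then: (a) $VB_2$ is isomorphic to $\mathbb{Z}*\mathbb{Z}_2$, and this group is residually nilpotent; (b) for $n\geq 2$, $\Gamma_1(VB_n)/\Gamma_2(VB_n)\cong\mathbb{Z}\oplus\mathbb{Z}_2$; (c) $\Gamma_2(VB_3)/\Gamma_3(VB_3)\cong\mathbb{Z}_2$, and for $n\geq 4$, $\Gamma_2(VB_n)=\Gamma_3(VB_n)$; (d) for $n\geq 3$, $VB_n$ is not residually nilpotent.
   Context: The virtual braid group $VB_n$ is the group with generators $\sigma_i,\rho_i$ ($i=1,\dots,n-1$) and defining relations: $\sigma_i\sigma_{i+1}\sigma_i=\sigma_{i+1}\sigma_i\sigma_{i+1}$ ($1\le i\le n-2$); $\sigma_i\sigma_j=\sigma_j\sigma_i$ ($|i-j|\geq 2$); $\rho_i\rho_{i+1}\rho_i=\rho_{i+1}\rho_i\rho_{i+1}$ ($1\le i\le n-2$); $\rho_i\rho_j=\rho_j\rho_i$ ($|i-j|\geq 2$); $\rho_i^2=1$; $\sigma_i\rho_j=\rho_j\sigma_i$ ($|i-j|\geq2$); $\rho_i\rho_{i+1}\sigma_i=\sigma_{i+1}\rho_i\rho_{i+1}$ ($1\le i\le n-2$). For a group $G$, $\Gamma_1(G)=G$, $\Gamma_i(G)=[\Gamma_{i-1}(G),G]$. A group $G$ is residually nilpotent if $\bigcap_{i\ge1}\Gamma_i(G)=\{1\}$. $\mathbb{Z}_2=\mathbb{Z}/2\mathbb{Z}$. *)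

(* Defs.v *)
From Stdlib Require Import List ZArith Bool Lia.
Import ListNotations.

Set Implicit Arguments.

Record SGroup := {
  gcar :> Type;
  geq : gcar -> gcar -> Prop;
  gmul : gcar -> gcar -> gcar;
  ginv : gcar -> gcar;
  gone : gcar;
  geq_refl : forall x, geq x x;
  geq_sym : forall x y, geq x y -> geq y x;
  geq_trans : forall x y z, geq x y -> geq y z -> geq x z;
  gmul_compat : forall x x' y y', geq x x' -> geq y y' ->
                  geq (gmul x y) (gmul x' y');
  ginv_compat : forall x x', geq x x' -> geq (ginv x) (ginv x');
  gmul_assoc : forall x y z, geq (gmul x (gmul y z)) (gmul (gmul x y) z);
  gmul_1l : forall x, geq (gmul gone x) x;
  gmul_Vl : forall x, geq (gmul (ginv x) x) gone }.

Arguments geq {s} _ _.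
Arguments gmul {s} _ _.
Arguments ginv {s} _.
Arguments gone {s}.

Definition hom {G H : SGroup} (f : G -> H) : Prop :=
  (forall x y, geq x y -> geq (f x) (f y)) /\
  (forall x y, geq (f (gmul x y)) (gmul (f x) (f y))).

Definition isomorphic (G H : SGroup) : Prop :=
  exists (f : G -> H) (g : H -> G), hom f /\ hom g /\
    (forall x, geq (g (f x)) x) /\ (forall y, geq (f (g y)) y).

Inductive gen {G : SGroup} (S : G -> Prop) : G -> Prop :=
  | gen_in x : S x -> gen S x
  | gen_one : gen S gone
  | gen_mul x y : gen S x -> gen S y -> gen S (gmul x y)
  | gen_inv x : gen S x -> gen S (ginv x)
  | gen_eq x y : geq x y -> gen S x -> gen S y.

Definition comm {G : SGroup} (x y : G) : G :=
  gmul (gmul (ginv x) (ginv y)) (gmul x y).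

(** Lower central series: Gamma 1 = G, Gamma (i+1) = [Gamma i, G].
    (Gamma 0 is also set to G; it is never used.) *)
Fixpoint Gamma (G : SGroup) (i : nat) : G -> Prop :=
  match i with
  | S (S _ as j) =>
      gen (fun z => exists x y, Gamma G j x /\ z = comm x y)
  | _ => fun _ => True
  end.

Definition resid_nilp (G : SGroup) : Prop :=
  forall x : G, (forall i, 1 <= i -> Gamma G i x) -> geq x gone.

(** [quot_iso G A B H]: the quotient A/B (B a normal subgroup of the
    subgroup A of G) is isomorphic to H, witnessed by a map f : A -> H that
    is well defined on cosets xB, multiplicative, injective on cosets and
    surjective (i.e. f induces a bijective homomorphism A/B -> H). *)
Definition quot_iso {G : SGroup} (A B : G -> Prop) (H : SGroup) : Prop :=
  exists f : G -> H,
    (forall x y, A x -> A y -> B (gmul (ginv x) y) -> geq (f x) (f y)) /\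
    (forall x y, A x -> A y -> geq (f (gmul x y)) (gmul (f x) (f y))) /\
    (forall x y, A x -> A y -> geq (f x) (f y) -> B (gmul (ginv x) y)) /\
    (forall h : H, exists x, A x /\ geq (f x) h).

Section Presented.
Variable X : Type.
Definition word := list (X * bool).  (* (x, false) = x, (x, true) = x^-1 *)
Variable R : word -> word -> Prop.

Definition winv (w : word) : word :=
  rev (map (fun p => (fst p, negb (snd p))) w).

Inductive weq : word -> word -> Prop :=
  | weq_refl u : weq u u
  | weq_sym u v : weq u v -> weq v u
  | weq_trans u v w : weq u v -> weq v w -> weq u w
  | weq_cat u u' v v' : weq u u' -> weq v v' -> weq (u ++ v) (u' ++ v')
  | weq_free a b : weq [(a, b); (a, negb b)] []
  | weq_rel u v : R u v -> weq u v.

Lemma weq_free' a b : weq [(a, negb b); (a, b)] [].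
Proof. generalize (weq_free a (negb b)). rewrite negb_involutive. auto. Qed.

Lemma winv_l w : weq (winv w ++ w) [].
Proof.
  induction w as [|[a b] w IH]; [apply weq_refl|].
  unfold winv; simpl; fold (winv w).
  rewrite <- app_assoc. simpl.
  apply weq_trans with (winv w ++ ([] ++ w)); [|exact IH].
  apply weq_cat; [apply weq_refl|].
  change ((a, negb b) :: (a, b) :: w) with ([(a, negb b); (a, b)] ++ w).
  apply weq_cat; [apply weq_free'|apply weq_refl].
Qed.

Lemma winv_winv w : winv (winv w) = w.
Proof.
  unfold winv. rewrite map_rev, rev_involutive, map_map.
  induction w as [|[a b] w IH]; simpl; [reflexivity|].
  rewrite negb_involutive; f_equal; exact IH.
Qed.

Lemma winv_r w : weq (w ++ winv w) [].
Proof. rewrite <- (winv_winv w) at 1. apply winv_l. Qed.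

Lemma winv_compat u v : weq u v -> weq (winv u) (winv v).
Proof.
  intro H.
  apply weq_trans with (winv u ++ (v ++ winv v)).
  { rewrite <- (app_nil_r (winv u)) at 1. apply weq_cat; [apply weq_refl|].
    apply weq_sym, winv_r. }
  apply weq_trans with ((winv u ++ u) ++ winv v).
  { rewrite <- app_assoc. apply weq_cat; [apply weq_refl|].
    apply weq_cat; [apply weq_sym, H|apply weq_refl]. }
  change (winv v) with ([] ++ winv v) at 2.
  apply weq_cat; [apply winv_l|apply weq_refl].
Qed.

Definition Presented : SGroup :=
  {| gcar := word; geq := weq; gmul := @app _; ginv := winv; gone := [];
     geq_refl := weq_refl; geq_sym := weq_sym; geq_trans := weq_trans;
     gmul_compat := fun x x' y y' h1 h2 => weq_cat h1 h2;
     ginv_compat := winv_compat;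
     gmul_assoc := fun x y z => ltac:(rewrite app_assoc; apply weq_refl);
     gmul_1l := fun x => weq_refl x;
     gmul_Vl := winv_l |}.
End Presented.

Definition idx (n : nat) := {i : nat | 1 <= i < n}.
(* Generators: (true, i) = sigma_i, (false, i) = rho_i. *)
Definition VBgen (n : nat) := (bool * idx n)%type.

Definition sg {n} (a : idx n) : VBgen n * bool := ((true, a), false).
Definition rh {n} (a : idx n) : VBgen n * bool := ((false, a), false).

Definition far {n} (a b : idx n) : Prop :=
  proj1_sig a + 2 <= proj1_sig b \/ proj1_sig b + 2 <= proj1_sig a.
Definition next {n} (a b : idx n) : Prop := proj1_sig b = S (proj1_sig a).

Definition VBrel (n : nat) (u v : word (VBgen n)) : Prop :=
  (exists a b, next a b /\ u = [sg a; sg b; sg a] /\ v = [sg b; sg a; sg b]) \/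
  (exists a b, far a b /\ u = [sg a; sg b] /\ v = [sg b; sg a]) \/
  (exists a b, next a b /\ u = [rh a; rh b; rh a] /\ v = [rh b; rh a; rh b]) \/
  (exists a b, far a b /\ u = [rh a; rh b] /\ v = [rh b; rh a]) \/
  (exists a, u = [rh a; rh a] /\ v = []) \/
  (exists a b, far a b /\ u = [sg a; rh b] /\ v = [rh b; sg a]) \/
  (exists a b, next a b /\ u = [rh a; rh b; sg a] /\ v = [sg b; rh a; rh b]).

Definition VB (n : nat) : SGroup := Presented (@VBrel n).

(** * Z * Z_2 (free product), presented as < a, b | b^2 = 1 >:
    generator true = a (generating Z), false = b (generating Z_2). *)
Definition ZZ2rel (u v : word bool) : Prop :=
  u = [(false, false); (false, false)] /\ v = [].
Definition Z_free_Z2 : SGroup := Presented ZZ2rel.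

Definition Z2 : SGroup.
Proof.
  refine {| gcar := bool; geq := @eq bool; gmul := xorb; ginv := fun b => b;
            gone := false |}; intros; subst; try reflexivity;
    repeat match goal with b : bool |- _ => destruct b end; reflexivity.
Defined.

Definition Z_plus_Z2 : SGroup.
Proof.
  refine {| gcar := (Z * bool)%type; geq := @eq (Z * bool);
            gmul := fun p q => (fst p + fst q, xorb (snd p) (snd q))%Z;
            ginv := fun p => (- fst p, snd p)%Z; gone := (0%Z, false) |};
    intros; subst; try reflexivity.
  - destruct x as [x1 x2], y as [y1 y2], z as [z1 z2]; simpl.
    f_equal; [lia| now destruct x2, y2, z2].
  - destruct x; reflexivity.
  - destruct x as [x1 x2]; simpl; f_equal; [lia| now destruct x2].
Defined.

(* Main.v *)
Require Import Defs.
From Stdlib Require Import List ZArith Bool Lia Setoid Morphisms Btauto Classical Arith FunctionalExtensionality.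
Import ListNotations.
Set Implicit Arguments.


Section PG.
Variable X : Type.
Variable R : word X -> word X -> Prop.

Notation "u ≈ v" := (weq R u v) (at level 70).

Global Instance weq_equiv : Equivalence (weq R).
Proof. split; red; [apply weq_refl|apply weq_sym|apply weq_trans]. Qed.

Global Instance app_proper : Proper (weq R ==> weq R ==> weq R) (@app (X * bool)).
Proof. intros a b H c d H'. now apply weq_cat. Qed.

Global Instance winv_proper : Proper (weq R ==> weq R) (@winv X).
Proof. intros a b H. now apply winv_compat. Qed.

Lemma winv_app (u v : word X) : winv (u ++ v) = winv v ++ winv u.
Proof. unfold winv. now rewrite map_app, rev_app_distr. Qed.

Lemma winv_nil : winv (X:=X) [] = [].
Proof. reflexivity. Qed.

Lemma winv_cons (l : X * bool) u : winv (l :: u) = winv u ++ [(fst l, negb (snd l))].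
Proof. reflexivity. Qed.

Lemma wc0 (x B : word X) : x ++ winv x ++ B ≈ B.
Proof. rewrite app_assoc. rewrite (winv_r R x). reflexivity. Qed.

Lemma wc1 (x B : word X) : winv x ++ x ++ B ≈ B.
Proof. rewrite app_assoc. rewrite (winv_l R x). reflexivity. Qed.

Lemma wc0' (x : word X) : x ++ winv x ≈ [].
Proof. apply winv_r. Qed.

Lemma wc1' (x : word X) : winv x ++ x ≈ [].
Proof. apply winv_l. Qed.

Definition Gm k (u : word X) : Prop := Gamma (Presented R) k u.

Definition wcomm (x y : word X) := winv x ++ winv y ++ x ++ y.

Lemma comm_P (x y : word X) : @comm (Presented R) x y = wcomm x y.
Proof. unfold comm, wcomm; simpl. now rewrite <- !app_assoc. Qed.

Lemma gen_indP (S P : word X -> Prop) :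
  (forall x, S x -> P x) -> P [] -> (forall x y, P x -> P y -> P (x ++ y)) ->
  (forall x, P x -> P (winv x)) -> (forall x y, x ≈ y -> P x -> P y) ->
  forall x, gen (G := Presented R) S x -> P x.
Proof. intros H1 H2 H3 H4 H5 x H. induction H; eauto. Qed.

Lemma gen_app' (S : word X -> Prop) x y : gen (G:=Presented R) S x -> gen (G:=Presented R) S y -> gen (G:=Presented R) S (x ++ y).
Proof. intros; now apply (gen_mul (G:=Presented R)). Qed.
Lemma gen_winv' (S : word X -> Prop) x : gen (G:=Presented R) S x -> gen (G:=Presented R) S (winv x).
Proof. intros; now apply (gen_inv (G:=Presented R)). Qed.
Lemma gen_nil' (S : word X -> Prop) : gen (G:=Presented R) S [].
Proof. apply (gen_one (G:=Presented R)). Qed.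
Lemma gen_weq' (S : word X -> Prop) x y : x ≈ y -> gen (G:=Presented R) S x -> gen (G:=Presented R) S y.
Proof. intros; now apply (gen_eq (G:=Presented R)) with x. Qed.

Definition CS k := fun z : word X => exists x y : word X, Gm k x /\ z = @comm (Presented R) x y.
Lemma Gm_SS j u : Gm (S (S j)) u = gen (G:=Presented R) (CS (S j)) u.
Proof. reflexivity. Qed.

Lemma Gm_le1 k u : k <= 1 -> Gm k u.
Proof. intros. destruct k as [|[|k]]; [exact I|exact I|lia]. Qed.

Lemma Gm_weq k u v : u ≈ v -> Gm k u -> Gm k v.
Proof.
  intros H G. destruct k as [|[|k]]; try exact I.
  rewrite Gm_SS in *. now apply gen_weq' with u.
Qed.

Global Instance Gm_proper k : Proper (weq R ==> iff) (Gm k).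
Proof. intros u v H; split; apply Gm_weq; [exact H| symmetry; exact H]. Qed.

Lemma Gm_nil k : Gm k [].
Proof. destruct k as [|[|k]]; try exact I. rewrite Gm_SS. apply gen_nil'. Qed.

Lemma Gm_app k u v : Gm k u -> Gm k v -> Gm k (u ++ v).
Proof. destruct k as [|[|k]]; try (intros; exact I). rewrite !Gm_SS. apply gen_app'. Qed.

Lemma Gm_winv k u : Gm k u -> Gm k (winv u).
Proof. destruct k as [|[|k]]; try (intros; exact I). rewrite !Gm_SS. apply gen_winv'. Qed.

Lemma Gm_comm k x y : Gm k x -> Gm (S k) (wcomm x y).
Proof.
  intros H. destruct k as [|k]; [exact I|].
  rewrite Gm_SS, <- comm_P. apply (gen_in (G:=Presented R)). exists x, y. auto.
Qed.

Lemma wcomm_conj (g x y : word X) :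
  winv g ++ wcomm x y ++ g ≈ wcomm (winv g ++ x ++ g) (winv g ++ y ++ g).
Proof.
  unfold wcomm. rewrite !winv_app, !winv_winv. rewrite <- !app_assoc.
  rewrite (wc0 g). rewrite (wc0 g). rewrite (wc0 g). reflexivity.
Qed.

Lemma Gm_conj k : forall u g, Gm k u -> Gm k (winv g ++ u ++ g).
Proof.
  induction k as [|k IH]; intros u g H; [exact I|].
  destruct k as [|k]; [exact I|].
  rewrite Gm_SS in *. revert u H.
  apply (@gen_indP (CS (S k)) (fun u => gen (G:=Presented R) (CS (S k)) (winv g ++ u ++ g))).
  - intros x [a [b [Ha ->]]]. rewrite comm_P.
    apply gen_weq' with (wcomm (winv g ++ a ++ g) (winv g ++ b ++ g)).
    + symmetry. apply wcomm_conj.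
    + rewrite <- comm_P. apply (gen_in (G:=Presented R)). do 2 eexists; split; [|reflexivity]. now apply IH.
  - apply gen_weq' with []; [symmetry; simpl; apply wc1'|apply gen_nil'].
  - intros x y Hx Hy. apply gen_weq' with ((winv g ++ x ++ g) ++ (winv g ++ y ++ g)).
    + rewrite <- !app_assoc. rewrite (wc0 g). reflexivity.
    + now apply gen_app'.
  - intros x Hx. replace (winv g ++ winv x ++ g) with (winv (winv g ++ x ++ g)).
    + now apply gen_winv'.
    + rewrite !winv_app, winv_winv. now rewrite app_assoc.
  - intros x y Hxy. apply gen_weq'. now rewrite Hxy.
Qed.

Lemma Gm_conj' k u g : Gm k u -> Gm k (g ++ u ++ winv g).
Proof. intros H. pose proof (Gm_conj k u (winv g) H). now rewrite winv_winv in H0. Qed.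

Lemma Gm_dec k u : Gm (S k) u -> Gm k u.
Proof.
  destruct k as [|k]; [intros; exact I|].
  rewrite Gm_SS. revert u.
  apply (@gen_indP (CS (S k)) (fun u => Gm (S k) u)).
  - intros x [a [b [Ha ->]]]. rewrite comm_P. unfold wcomm.
    apply Gm_app; [now apply Gm_winv|].
    now apply Gm_conj.
  - apply Gm_nil.
  - apply Gm_app.
  - apply Gm_winv.
  - intros x y H. now rewrite H.
Qed.

Lemma Gm_dec' k j u : j <= k -> Gm k u -> Gm j u.
Proof. intros Hle. induction Hle; auto. intros HG. apply IHHle. now apply Gm_dec. Qed.

Definition cg k (u v : word X) := Gm k (winv u ++ v).

Lemma cg_refl k u : cg k u u.
Proof. unfold cg. rewrite wc1'. apply Gm_nil. Qed.

Lemma cg_sym k u v : cg k u v -> cg k v u.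
Proof. unfold cg. intros H. apply Gm_winv in H. now rewrite winv_app, winv_winv in H. Qed.

Lemma cg_trans k u v w : cg k u v -> cg k v w -> cg k u w.
Proof.
  unfold cg. intros H1 H2. pose proof (Gm_app _ _ _ H1 H2). rewrite <- app_assoc in H.
  now rewrite (wc0 v) in H.
Qed.

Lemma cg_weq k u v : u ≈ v -> cg k u v.
Proof. intros H. unfold cg. rewrite H, wc1'. apply Gm_nil. Qed.

Global Instance cg_equiv k : Equivalence (cg k).
Proof. split; red; [apply cg_refl|apply cg_sym|apply cg_trans]. Qed.

Lemma cg_l k w u v : cg k u v -> cg k (w ++ u) (w ++ v).
Proof. unfold cg. rewrite winv_app, <- app_assoc. now rewrite (wc1 w). Qed.

Lemma cg_lcancel k w u v : cg k (w ++ u) (w ++ v) -> cg k u v.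
Proof. unfold cg. rewrite winv_app, <- app_assoc. now rewrite (wc1 w). Qed.

Lemma cg_r k w u v : cg k u v -> cg k (u ++ w) (v ++ w).
Proof.
  unfold cg. intros H. rewrite winv_app, <- app_assoc.
  pose proof (Gm_conj k _ w H) as H0. now rewrite <- app_assoc in H0.
Qed.

Global Instance cg_app_proper k : Proper (cg k ==> cg k ==> cg k) (@app (X*bool)).
Proof.
  intros a b H c d H'. transitivity (a ++ d). now apply cg_l. now apply cg_r.
Qed.

Global Instance cg_weq_sub k : subrelation (weq R) (cg k).
Proof. intros u v H. now apply cg_weq. Qed.

Lemma cg_winv k u v : cg k u v -> cg k (winv u) (winv v).
Proof.
  unfold cg. rewrite winv_winv. intros H.
  apply Gm_winv in H. rewrite winv_app, winv_winv in H.
  pose proof (Gm_conj' k _ u H) as H0.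
  rewrite <- !app_assoc in H0. rewrite (wc0' u), app_nil_r in H0. exact H0.
Qed.

Lemma cg_Gm k u : cg k [] u <-> Gm k u.
Proof. reflexivity. Qed.

End PG.

Section PG2.
Variable X : Type.
Variable R : word X -> word X -> Prop.
Notation "u ≈ v" := (weq R u v) (at level 70).
Notation Gm := (Gm R).
Notation cg := (cg R).

Lemma wcomm_winv (x y : word X) : winv (wcomm x y) = wcomm y x.
Proof. unfold wcomm. rewrite !winv_app, !winv_winv. now rewrite <- !app_assoc. Qed.

Lemma wcomm_weq x x' y y' : x ≈ x' -> y ≈ y' -> wcomm x y ≈ wcomm x' y'.
Proof. intros H1 H2. unfold wcomm. now rewrite H1, H2. Qed.

Lemma T1 (u v w : word X) : wcomm (u ++ v) w ≈ (winv v ++ wcomm u w ++ v) ++ wcomm v w.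
Proof.
  unfold wcomm. rewrite !winv_app. rewrite <- !app_assoc.
  rewrite (wc0 R v). rewrite (wc0 R w). reflexivity.
Qed.

Lemma T2 (u v w : word X) : wcomm u (v ++ w) ≈ wcomm u w ++ (winv w ++ wcomm u v ++ w).
Proof.
  unfold wcomm. rewrite !winv_app. rewrite <- !app_assoc.
  rewrite (wc0 R w). rewrite (wc0 R u). reflexivity.
Qed.

Lemma Gm_comm' k x y : Gm k y -> Gm (S k) (wcomm x y).
Proof. intros H. rewrite <- (winv_winv (wcomm x y)), wcomm_winv. apply Gm_winv. now apply Gm_comm. Qed.

Lemma central k c g : Gm k c -> cg (S k) c (winv g ++ c ++ g).
Proof. intros H. unfold cg. apply (Gm_comm R k c g) in H. exact H. Qed.

Lemma central' k c g : Gm k c -> cg (S k) c (g ++ c ++ winv g).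
Proof. intros H. pose proof (central k c (winv g) H) as H0. now rewrite winv_winv in H0. Qed.

Lemma cg_Gm_iff k u v : cg k u v -> (Gm k u <-> Gm k v).
Proof.
  intros H. unfold cg in H. split; intros H'.
  - pose proof (Gm_app R k _ _ H' H) as H0. now rewrite (wc0 R u) in H0.
  - apply Gm_winv in H. rewrite winv_app, winv_winv in H.
    pose proof (Gm_app R k _ _ H' H) as H0. now rewrite (wc0 R v) in H0.
Qed.

Lemma T1c (u v w : word X) : cg 3 (wcomm (u ++ v) w) (wcomm u w ++ wcomm v w).
Proof.
  rewrite T1. apply cg_r. symmetry. apply central. apply Gm_comm. apply Gm_le1; lia.
Qed.

Lemma T2c (u v w : word X) : cg 3 (wcomm u (v ++ w)) (wcomm u v ++ wcomm u w).
Proof.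
  rewrite T2. transitivity (wcomm u w ++ wcomm u v).
  - apply cg_l. symmetry. apply central. apply Gm_comm. apply Gm_le1; lia.
  - unfold cg. rewrite winv_app. rewrite <- !app_assoc.
    change (Gm 3 (wcomm (wcomm u v) (wcomm u w))).
    apply (Gm_comm R 2). apply Gm_comm. apply Gm_le1; lia.
Qed.

Lemma comm_cg_l x x' y : cg 2 x x' -> cg 3 (wcomm x y) (wcomm x' y).
Proof.
  intros H. unfold cg in H.
  assert (E : x' ≈ x ++ (winv x ++ x')) by (now rewrite (wc0 R x)).
  rewrite (wcomm_weq E (reflexivity y)).
  rewrite T1c. transitivity (wcomm x y ++ []); [now rewrite app_nil_r|].
  apply cg_l. apply (proj2 (cg_Gm R 3 _)). apply (Gm_comm R 2). exact H.
Qed.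

Lemma comm_cg_r x y y' : cg 2 y y' -> cg 3 (wcomm x y) (wcomm x y').
Proof.
  intros H. unfold cg in H.
  assert (E : y' ≈ y ++ (winv y ++ y')) by (now rewrite (wc0 R y)).
  rewrite (wcomm_weq (reflexivity x) E).
  rewrite T2c. transitivity (wcomm x y ++ []); [now rewrite app_nil_r|].
  apply cg_l. apply (proj2 (cg_Gm R 3 _)). apply (Gm_comm' 2). exact H.
Qed.

End PG2.

Section Eval.
Variable X : Type.
Variable R : word X -> word X -> Prop.
Variable T : Type.
Variable op : T -> T -> T.
Variable e : T.
Variable h : X * bool -> T.
Hypothesis op_assoc : forall a b c, op a (op b c) = op (op a b) c.
Hypothesis op_e_l : forall a, op e a = a.
Hypothesis op_e_r : forall a, op a e = a.

Definition ev (w : word X) : T := fold_right (fun l a => op (h l) a) e w.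

Lemma ev_app u v : ev (u ++ v) = op (ev u) (ev v).
Proof. induction u as [|l u IH]; simpl. now rewrite op_e_l. now rewrite IH, op_assoc. Qed.

Lemma ev_weq (Hfree : forall a b, op (h (a, b)) (h (a, negb b)) = e)
  (Hrel : forall u v, R u v -> ev u = ev v) :
  forall u v, weq R u v -> ev u = ev v.
Proof.
  intros u v H. induction H; try congruence.
  - rewrite !ev_app; congruence.
  - simpl. now rewrite op_e_r, Hfree.
  - auto.
Qed.
End Eval.

Definition ser := list bool -> bool.
Fixpoint mul (p q : ser) (m : list bool) : bool :=
  match m with
  | [] => p [] && q []
  | c :: m' => xorb (p [] && q m) (mul (fun t => p (c :: t)) q m')
  end.
Definition one : ser := fun m => match m with [] => true | _ => false end.
Definition add (p q : ser) : ser := fun m => xorb (p m) (q m).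
Definition shift (c : bool) (p : ser) : ser := fun t => p (c :: t).
Definition scal (b : bool) (p : ser) : ser := fun t => b && p t.

Lemma mul_nil p q : mul p q [] = p [] && q [].
Proof. reflexivity. Qed.
Lemma mul_cons p q c m : mul p q (c :: m) = xorb (p [] && q (c :: m)) (mul (shift c p) q m).
Proof. reflexivity. Qed.

Lemma mul_ext : forall m p p' q q',
  (forall m1 m2, m1 ++ m2 = m -> p m1 = p' m1 /\ q m2 = q' m2) -> mul p q m = mul p' q' m.
Proof.
  induction m as [|c m IH]; intros p p' q q' H.
  - destruct (H [] [] eq_refl) as [H1 H2]. rewrite !mul_nil. congruence.
  - rewrite !mul_cons. destruct (H [] (c::m) eq_refl) as [H1 H2]. rewrite H1, H2. f_equal.
    apply IH. intros m1 m2 E. apply (H (c::m1) m2). simpl; congruence.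
Qed.

Lemma mul_ext_pw m p p' q q' : (forall t, p t = p' t) -> (forall t, q t = q' t) ->
  mul p q m = mul p' q' m.
Proof. intros. apply mul_ext; auto. Qed.

Lemma mul_zero : forall m p q,
  (forall m1 m2, m1 ++ m2 = m -> p m1 && q m2 = false) -> mul p q m = false.
Proof.
  induction m as [|c m IH]; intros p q H.
  - rewrite mul_nil. now apply (H [] []).
  - rewrite mul_cons. rewrite (H [] (c::m) eq_refl). simpl.
    apply IH. intros m1 m2 E. apply (H (c::m1) m2). simpl; congruence.
Qed.

Lemma mul_one_l m q : mul one q m = q m.
Proof.
  destruct m as [|c m].
  - rewrite mul_nil. reflexivity.
  - rewrite mul_cons. rewrite mul_zero. simpl. now rewrite xorb_false_r.
    intros; reflexivity.
Qed.

Lemma mul_one_r : forall m p, mul p one m = p m.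
Proof.
  induction m as [|c m IH]; intros p.
  - rewrite mul_nil. simpl. now rewrite andb_true_r.
  - rewrite mul_cons, IH. simpl. now rewrite andb_false_r.
Qed.

Lemma mul_add_l : forall m p p' q, mul (add p p') q m = xorb (mul p q m) (mul p' q m).
Proof.
  induction m as [|c m IH]; intros p p' q.
  - rewrite !mul_nil. unfold add. btauto.
  - rewrite !mul_cons. change (shift c (add p p')) with (add (shift c p) (shift c p')).
    rewrite IH. unfold add. btauto.
Qed.

Lemma mul_add_r : forall m p q q', mul p (add q q') m = xorb (mul p q m) (mul p q' m).
Proof.
  induction m as [|c m IH]; intros p q q'.
  - rewrite !mul_nil. unfold add. btauto.
  - rewrite !mul_cons. rewrite IH. unfold add. btauto.
Qed.

Lemma mul_scal_l : forall m b p q, mul (scal b p) q m = b && mul p q m.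
Proof.
  induction m as [|c m IH]; intros b p q.
  - rewrite !mul_nil. unfold scal. btauto.
  - rewrite !mul_cons. change (shift c (scal b p)) with (scal b (shift c p)).
    rewrite IH. unfold scal. btauto.
Qed.

Lemma mul_assoc : forall m p q r, mul (mul p q) r m = mul p (mul q r) m.
Proof.
  induction m as [|c m IH]; intros p q r.
  - rewrite !mul_nil. btauto.
  - rewrite !mul_cons.
    rewrite (mul_ext_pw m (shift c (mul p q)) (add (scal (p []) (shift c q)) (mul (shift c p) q)) r r).
    2: { intros t. unfold shift at 1. rewrite mul_cons. reflexivity. }
    2: { reflexivity. }
    rewrite mul_add_l, mul_scal_l, IH. rewrite mul_nil. btauto.
Qed.

(* valid monomials: no two consecutive y's *)
Definition valid (m : list bool) : Prop := ~ exists u v, m = u ++ true :: true :: v.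

Lemma valid_app_l m1 m2 : valid (m1 ++ m2) -> valid m1.
Proof. intros H [u [v E]]. apply H. exists u, (v ++ m2). subst. now rewrite <- app_assoc. Qed.
Lemma valid_app_r m1 m2 : valid (m1 ++ m2) -> valid m2.
Proof. intros H [u [v E]]. apply H. exists (m1 ++ u), v. subst. now rewrite <- app_assoc. Qed.
Lemma valid_nil : valid [].
Proof. intros [u [v E]]. destruct u; discriminate. Qed.
Lemma valid_cons_false m : valid m -> valid (false :: m).
Proof.
  intros H [u [v E]]. destruct u as [|a u]; [discriminate|]. injection E as _ E.
  apply H. eauto.
Qed.
Lemma valid_cons_true m : valid m -> head m <> Some true -> valid (true :: m).
Proof.
  intros H Hh [u [v E]]. destruct u as [|a u].
  - injection E as E. subst. simpl in Hh. congruence.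
  - injection E as _ E. apply H. eauto.
Qed.
Lemma valid_tail c m : valid (c :: m) -> valid m.
Proof. intros H. apply (@valid_app_r [c] m H). Qed.

Definition seqv (p q : ser) := forall m, valid m -> p m = q m.

Lemma seqv_refl p : seqv p p. Proof. now intros m _. Qed.
Lemma seqv_sym p q : seqv p q -> seqv q p. Proof. intros H m V. now rewrite H. Qed.
Lemma seqv_trans p q r : seqv p q -> seqv q r -> seqv p r.
Proof. intros H1 H2 m V. now rewrite H1, H2. Qed.

Lemma mul_seqv p p' q q' : seqv p p' -> seqv q q' -> seqv (mul p q) (mul p' q').
Proof.
  intros H1 H2 m V. apply mul_ext. intros m1 m2 E. subst. split.
  - apply H1. eapply valid_app_l; eauto.
  - apply H2. eapply valid_app_r; eauto.
Qed.

Fixpoint cnt (m : list bool) : nat :=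
  match m with [] => 0 | b :: m => (if b then 1 else 0) + cnt m end.
Lemma cnt_app m1 m2 : cnt (m1 ++ m2) = cnt m1 + cnt m2.
Proof. induction m1 as [|b m1 IH]; simpl; [reflexivity|]. rewrite IH; lia. Qed.

Definition Ik (k : nat) (p : ser) := forall m, valid m -> length m < k -> p m = false.

Lemma mul_Ik j k p q : Ik j p -> Ik k q -> Ik (j + k) (mul p q).
Proof.
  intros Hp Hq m V L. apply mul_zero. intros m1 m2 E. subst.
  rewrite length_app in L.
  destruct (Nat.lt_ge_cases (length m1) j) as [H|H].
  - rewrite (Hp m1); auto. eapply valid_app_l; eauto.
  - rewrite (Hq m2); [apply andb_false_r| eapply valid_app_r; eauto| lia].
Qed.
Lemma Ik_0 p : Ik 0 p. Proof. intros m _ L. lia. Qed.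
Lemma Ik_add k p q : Ik k p -> Ik k q -> Ik k (add p q).
Proof. intros H1 H2 m V L. unfold add. now rewrite H1, H2. Qed.
Lemma Ik_le j k p : j <= k -> Ik k p -> Ik j p.
Proof. intros H1 H2 m V L. apply H2; auto; lia. Qed.
Lemma Ik_seqv k p q : seqv p q -> Ik k p -> Ik k q.
Proof. intros H1 H2 m V L. rewrite <- H1; auto. Qed.

Definition A : ser := fun m => match m with [] => true | [false] => true | _ => false end.
Definition A' : ser := fun m => forallb negb m.
Definition B : ser := fun m => match m with [] => true | [true] => true | _ => false end.
Definition img (l : bool * bool) : ser :=
  match l with (true, false) => A | (true, true) => A' | (false, _) => B end.
Definition Phi (w : word bool) : ser := fold_right (fun l acc => mul (img l) acc) one w.

Lemma Phi_cons l w : Phi (l :: w) = mul (img l) (Phi w).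
Proof. reflexivity. Qed.

Lemma Phi_app u v m : Phi (u ++ v) m = mul (Phi u) (Phi v) m.
Proof.
  revert m. induction u as [|l u IH]; intros m.
  - simpl app. now rewrite mul_one_l.
  - simpl app. rewrite Phi_cons. rewrite (mul_ext_pw m (img l) (img l) _ _ (fun _ => eq_refl) IH).
    rewrite <- mul_assoc. reflexivity.
Qed.

Lemma AA' m : mul A A' m = one m.
Proof.
  destruct m as [|c m]; [reflexivity|]. rewrite mul_cons. destruct c.
  - rewrite mul_zero; [reflexivity|]. intros; reflexivity.
  - rewrite (mul_ext_pw m (shift false A) one A' A'). 2: { intros [|? ?]; reflexivity. } 2: reflexivity.
    rewrite mul_one_l. simpl. now rewrite xorb_nilpotent.
Qed.

Lemma A'A : forall m, mul A' A m = one m.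
Proof.
  induction m as [|c m IH]; [reflexivity|]. rewrite mul_cons. destruct c.
  - rewrite mul_zero; [reflexivity|]. intros; reflexivity.
  - rewrite (mul_ext_pw m (shift false A') A' A A). 2,3: reflexivity.
    rewrite IH. simpl. destruct m; reflexivity.
Qed.

Lemma BB : seqv (mul B B) one.
Proof.
  intros m V. destruct m as [|c m]; [reflexivity|]. rewrite mul_cons. destruct c.
  - rewrite (mul_ext_pw m (shift true B) one B B). 2: { intros [|? ?]; reflexivity. } 2: reflexivity.
    rewrite mul_one_l. destruct m as [|[|] m]; try reflexivity.
    exfalso. apply V. exists [], m. reflexivity.
  - rewrite mul_zero; [reflexivity|]. intros; reflexivity.
Qed.

Lemma Phi_weq u v : weq ZZ2rel u v -> seqv (Phi u) (Phi v).
Proof.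
  intros H. induction H.
  - apply seqv_refl.
  - now apply seqv_sym.
  - eapply seqv_trans; eauto.
  - intros m V. rewrite !Phi_app. now apply mul_seqv.
  - intros m V. rewrite Phi_cons. rewrite (mul_ext_pw m _ (img (a,b)) _ (img (a, negb b))).
    2: reflexivity. 2: { intros t. rewrite Phi_cons. apply mul_one_r. }
    destruct a, b; simpl.
    + now rewrite A'A.
    + now rewrite AA'.
    + now apply BB.
    + now apply BB.
  - destruct H as [-> ->]. intros m V. rewrite Phi_cons.
    rewrite (mul_ext_pw m _ B _ B). 2: reflexivity. 2: { intros t. rewrite Phi_cons. apply mul_one_r. }
    now apply BB.
Qed.

Lemma Phi_const w : Phi w [] = true.
Proof. induction w as [|[[|] [|]] w IH]; simpl; auto. Qed.

Definition Dm (p : ser) : ser := add p one.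

Lemma Phi_inv_l u : seqv (mul (Phi (winv u)) (Phi u)) one.
Proof.
  intros m V. rewrite <- Phi_app. apply (Phi_weq (winv_l _ u)); auto.
Qed.

Lemma comm_diff X Y m : mul X Y m =
  xorb (mul Y X m) (xorb (mul (Dm X) (Dm Y) m) (mul (Dm Y) (Dm X) m)).
Proof.
  unfold Dm. rewrite !mul_add_l, !mul_add_r, !mul_one_l, !mul_one_r. btauto.
Qed.

Lemma prod_diff U V m : xorb (mul U V m) (one m) =
  xorb (mul (Dm U) (Dm V) m) (xorb (Dm U m) (Dm V m)).
Proof.
  unfold Dm. rewrite !mul_add_l, !mul_add_r, !mul_one_l, !mul_one_r. unfold add. btauto.
Qed.

Lemma comm_step X Y X' Y' k : seqv (mul X' X) one -> seqv (mul Y' Y) one ->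
  Ik k (Dm X) -> Ik 1 (Dm Y) -> Ik (S k) (Dm (mul X' (mul Y' (mul X Y)))).
Proof.
  intros HX HY IX IY.
  set (E := add (mul (Dm X) (Dm Y)) (mul (Dm Y) (Dm X))).
  assert (IE : Ik (S k) E).
  { apply Ik_add. replace (S k) with (k + 1) by lia. now apply mul_Ik.
    replace (S k) with (1 + k) by lia. now apply mul_Ik. }
  apply Ik_seqv with (mul X' (mul Y' E)).
  2: { replace (S k) with (0 + (0 + S k)) by lia. apply mul_Ik. apply Ik_0. apply mul_Ik. apply Ik_0. exact IE. }
  intros m V. unfold Dm, add.
  rewrite (mul_ext_pw m X' X' (mul Y' (mul X Y)) (add (mul Y' (mul Y X)) (mul Y' E))).
  2: reflexivity.
  2: { intros t. unfold add. rewrite <- mul_add_r. apply mul_ext_pw; [reflexivity|].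
       intros t'. unfold E, add. apply comm_diff. }
  rewrite mul_add_r.
  assert (H1 : mul X' (mul Y' (mul Y X)) m = one m).
  { rewrite (mul_ext_pw m X' X' _ (mul (mul Y' Y) X)). 2: reflexivity.
    2: { intros t. now rewrite mul_assoc. }
    rewrite <- (HX m V). apply mul_seqv; auto. apply seqv_refl.
    intros t Vt. rewrite (mul_seqv HY (seqv_refl X) Vt). apply mul_one_l. }
  rewrite H1. btauto.
Qed.

Lemma Phi_Gamma : forall k w, 1 <= k -> Gm ZZ2rel k w -> Ik k (Dm (Phi w)).
Proof.
  assert (base : forall w, Ik 1 (Dm (Phi w))).
  { intros w m V L. destruct m; [|simpl in L; lia]. unfold Dm, add. now rewrite Phi_const. }
  induction k as [|k IH]; intros w Hk HG; [lia|].
  destruct k as [|k]; [apply base|].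
  rewrite Gm_SS in HG. revert w HG.
  apply (@gen_indP _ _ (CS ZZ2rel (S k)) (fun w => Ik (S (S k)) (Dm (Phi w)))).
  - intros w [x [y [Hx ->]]]. rewrite comm_P. unfold wcomm.
    apply Ik_seqv with (Dm (mul (Phi (winv x)) (mul (Phi (winv y)) (mul (Phi x) (Phi y))))).
    + intros m V. unfold Dm, add. f_equal. rewrite !Phi_app. apply mul_ext_pw; [reflexivity|].
      intros t. rewrite !Phi_app. apply mul_ext_pw; [reflexivity|]. intros t'. now rewrite Phi_app.
    + apply comm_step; try apply Phi_inv_l; auto. apply IH; auto. lia.
  - intros m V L. unfold Dm, add. apply xorb_nilpotent.
  - intros x y Hx Hy m V L. unfold Dm, add. rewrite Phi_app.
    change (xorb (mul (Phi x) (Phi y) m) (one m) = false). rewrite prod_diff.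
    pose proof (mul_Ik Hx Hy V) as H. rewrite H by lia.
    unfold Dm, add in Hx, Hy. rewrite Hx, Hy by auto. reflexivity.
  - intros x Hx. apply Ik_seqv with (mul (Phi (winv x)) (Dm (Phi x))).
    + intros m V. unfold Dm at 1. rewrite mul_add_r, mul_one_r. rewrite (@Phi_inv_l x m V).
      unfold Dm, add. btauto.
    + replace (S (S k)) with (0 + S (S k)) by lia. apply mul_Ik; auto. apply Ik_0.
  - intros x y Hxy Hx. apply Ik_seqv with (Dm (Phi x)); auto.
    intros m V. unfold Dm, add. now rewrite (Phi_weq Hxy V).
Qed.

Lemma Phi_allGamma w : (forall i, 1 <= i -> Gm ZZ2rel i w) -> seqv (Phi w) one.
Proof.
  intros H m V.
  assert (H1 : 1 <= S (length m)) by lia.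
  pose proof (@Phi_Gamma (S (length m)) w H1 (H _ H1) m V (Nat.lt_succ_diag_r _)) as E.
  unfold Dm, add in E. destruct (Phi w m), (one m); simpl in *; congruence.
Qed.

Inductive syl := SA (n : Z) | SB.
Definition notSA (t : list syl) := match t with SA _ :: _ => False | _ => True end.
Definition notSB (t : list syl) := match t with SB :: _ => False | _ => True end.
Fixpoint wf (t : list syl) : Prop :=
  match t with
  | [] => True
  | SA n :: r => n <> 0%Z /\ notSA r /\ wf r
  | SB :: r => notSB r /\ wf r
  end.
Definition act (l : bool * bool) (t : list syl) : list syl :=
  match l with
  | (true, e) => let d := if e then (-1)%Z else 1%Z in
      match t with
      | SA n :: r => if Z.eqb (n + d) 0 then r else SA (n + d) :: r
      | _ => SA d :: t
      end
  | (false, _) => match t with SB :: r => r | _ => SB :: t end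
  end.
Definition red (w : word bool) := fold_right act [] w.
Definition embsyl (s : syl) : word bool :=
  match s with
  | SA n => if Z.ltb 0 n then repeat (true,false) (Z.to_nat n)
            else repeat (true,true) (Z.to_nat (- n))
  | SB => [(false,false)]
  end.
Definition embed (t : list syl) : word bool := flat_map embsyl t.

Lemma act_wf l t : wf t -> wf (act l t).
Proof.
  destruct l as [[|] e]; destruct t as [|[n|] r]; simpl; intros H.
  - destruct e; simpl; repeat split; try discriminate; tauto.
  - destruct e; simpl.
    + destruct (Z.eqb_spec (n + -1) 0); simpl; tauto.
    + destruct (Z.eqb_spec (n + 1) 0); simpl; tauto.
  - destruct e; simpl; repeat split; try discriminate; tauto.
  - auto.
  - tauto.
  - tauto.
Qed.

Notation "u ≈ v" := (weq ZZ2rel u v) (at level 70).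

Lemma canc a b w : (a, b) :: (a, negb b) :: w ≈ w.
Proof. change ([(a,b);(a,negb b)] ++ w ≈ [] ++ w). apply weq_cat; [apply weq_free|reflexivity]. Qed.

Lemma canc_bb w : (false,false) :: (false,false) :: w ≈ w.
Proof. change ([(false,false);(false,false)] ++ w ≈ [] ++ w). apply weq_cat; [apply weq_rel; split; reflexivity|reflexivity]. Qed.

Lemma b_inv w : (false,true) :: w ≈ (false,false) :: w.
Proof.
  transitivity ((false,true) :: (false,false) :: (false,false) :: w).
  - change ([(false,true)] ++ w ≈ [(false,true)] ++ (false,false) :: (false,false) :: w).
    apply weq_cat; [reflexivity|]. symmetry. apply canc_bb.
  - apply (canc false true).
Qed.

Lemma act_embed l t : wf t -> l :: embed t ≈ embed (act l t).
Proof.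
  intros W. destruct l as [[|] e].
  - destruct t as [|[n|] r].
    + destruct e; reflexivity.
    + simpl in W. destruct W as [Hn [Hr Wr]].
      destruct e; simpl act; match goal with |- context [Z.eqb ?a 0] => destruct (Z.eqb_spec a 0) as [E|E] end; cbn [embed flat_map].
      * assert (n = 1%Z) by lia. subst. simpl. apply (canc true true).
      * unfold embsyl. destruct (Z.ltb_spec 0 n); destruct (Z.ltb_spec 0 (n + -1)); try lia.
        -- replace (Z.to_nat n) with (S (Z.to_nat (n + -1))) by lia. simpl repeat. simpl app.
           apply (canc true true).
        -- replace (Z.to_nat (- (n + -1))) with (S (Z.to_nat (- n))) by lia. reflexivity.
      * assert (n = (-1)%Z) by lia. subst. simpl. apply (canc true false).
      * unfold embsyl. destruct (Z.ltb_spec 0 n); destruct (Z.ltb_spec 0 (n + 1)); try lia.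
        -- replace (Z.to_nat (n + 1)) with (S (Z.to_nat n)) by lia. reflexivity.
        -- replace (Z.to_nat (- n)) with (S (Z.to_nat (- (n + 1)))) by lia.
           simpl repeat. simpl app. apply (canc true false).
    + destruct e; reflexivity.
  - destruct t as [|[n|] r].
    + destruct e; [apply b_inv|reflexivity].
    + destruct e; [apply b_inv|reflexivity].
    + simpl. destruct e; [rewrite b_inv|]; apply canc_bb.
Qed.

Lemma red_spec w : wf (red w) /\ w ≈ embed (red w).
Proof.
  induction w as [|l w [W E]]; [split; [exact I|reflexivity]|].
  split; simpl; [now apply act_wf|].
  transitivity (l :: embed (red w)).
  - exact (weq_cat (weq_refl _ [l]) E).
  - now apply act_embed.
Qed.

Fixpoint nb (t : list syl) : nat := match t with [] => 0 | SA _ :: r => nb r | SB :: r => S (nb r) end.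
Fixpoint nbw (w : word bool) : nat := match w with [] => 0 | l :: w => (if fst l then 0 else 1) + nbw w end.
Lemma nbw_app u v : nbw (u ++ v) = nbw u + nbw v.
Proof. induction u as [|l u IH]; simpl; [reflexivity|]. rewrite IH; lia. Qed.
Lemma nbw_repeat b k : nbw (repeat (true, b) k) = 0.
Proof. induction k; simpl; auto. Qed.
Lemma nbw_embsyl n : nbw (embsyl (SA n)) = 0.
Proof. simpl. destruct (0 <? n)%Z; apply nbw_repeat. Qed.
Lemma nbw_embed t : nbw (embed t) = nb t.
Proof.
  induction t as [|[n|] r IH]; [reflexivity| |].
  - cbn [embed flat_map]. rewrite nbw_app, nbw_embsyl. exact IH.
  - cbn [embed flat_map]. change (nbw ((false,false) :: flat_map embsyl r) = S (nb r)).
    simpl. fold (embed r). now rewrite IH.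
Qed.

Lemma img_cnt (l : bool * bool) (m : list bool) : (if fst l then 0 else 1) < cnt m -> img l m = false.
Proof.
  destruct l as [[|] [|]]; simpl.
  - induction m as [|[|] m IH]; simpl; intros H; auto; lia.
  - destruct m as [|[|] [|[|] m]]; simpl; intros; auto; lia.
  - destruct m as [|[|] [|[|] m]]; simpl; intros; auto; lia.
  - destruct m as [|[|] [|[|] m]]; simpl; intros; auto; lia.
Qed.

Lemma Phi_cnt : forall w m, nbw w < cnt m -> Phi w m = false.
Proof.
  induction w as [|l w IH]; intros m H.
  - destruct m; simpl in *; [lia|reflexivity].
  - rewrite Phi_cons. apply mul_zero. intros m1 m2 E. subst. rewrite cnt_app in H.
    simpl in H. destruct (Nat.lt_ge_cases (nbw w) (cnt m2)).
    + rewrite IH; auto. apply andb_false_r.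
    + rewrite img_cnt; auto. lia.
Qed.

Lemma xblock : forall m1 p q M',
  (forall m, 0 < cnt m -> p m = false) ->
  (forall j, 0 < j -> q (repeat false j ++ true :: M') = false) ->
  mul p q (repeat false m1 ++ true :: M') = p (repeat false m1) && q (true :: M').
Proof.
  induction m1 as [|m1 IH]; intros p q M' Hp Hq.
  - cbn [repeat app]. rewrite mul_cons. rewrite (@mul_zero M' (shift true p) q).
    + apply xorb_false_r.
    + intros a b _. unfold shift. rewrite Hp; simpl; auto; lia.
  - change (repeat false (S m1) ++ true :: M') with (false :: (repeat false m1 ++ true :: M')).
    rewrite mul_cons. assert (HQ : 0 < S m1) by lia. apply Hq in HQ. simpl in HQ. rewrite HQ. rewrite andb_false_r. simpl xorb.
    rewrite IH; auto. intros m Hm. unfold shift. apply Hp. simpl. auto.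
Qed.

Definition An k := Phi (repeat (true,false) k).

Lemma Astep q j : mul A q (repeat false (S j)) = xorb (q (repeat false (S j))) (q (repeat false j)).
Proof.
  change (repeat false (S j)) with (false :: repeat false j) at 1. rewrite mul_cons.
  rewrite (mul_ext_pw _ (shift false A) one q q). 2: { intros [|? ?]; reflexivity. } 2: reflexivity.
  rewrite mul_one_l. reflexivity.
Qed.

Lemma An_spec : forall k, An k (repeat false k) = true /\ forall j, k < j -> An k (repeat false j) = false.
Proof.
  induction k as [|k [IH1 IH2]].
  - split; [reflexivity|]. intros [|j] H; [lia|reflexivity].
  - unfold An in *. simpl repeat at 1. split.
    + change (mul A (Phi (repeat (true,false) k)) (repeat false (S k)) = true).
      rewrite Astep, IH1, IH2 by lia. reflexivity.
    + intros [|j] H; [lia|].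
      change (mul A (Phi (repeat (true,false) k)) (repeat false (S j)) = false).
      rewrite Astep, !IH2 by lia. reflexivity.
Qed.

Lemma repeat_r {T} (x : T) k : repeat x (S k) = repeat x k ++ [x].
Proof. induction k; simpl; [reflexivity|]. simpl in IHk. now rewrite IHk. Qed.

Lemma repeat_cancel k : repeat (true,false) k ++ repeat (true,true) k ≈ [].
Proof.
  induction k as [|k IH]; [reflexivity|].
  replace (repeat (true,false) (S k) ++ repeat (true,true) (S k)) with
    ([(true,false)] ++ (repeat (true,false) k ++ repeat (true,true) k) ++ [(true,true)])
    by (rewrite (repeat_r (true,true) k); simpl; now rewrite app_assoc).
  rewrite IH. simpl. apply (canc true false).
Qed.

Lemma valid_rep m M : valid M -> valid (repeat false m ++ M).
Proof. induction m; simpl; auto. intros H. apply valid_cons_false; auto. Qed.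

Lemma cnt_rep m : cnt (repeat false m) = 0.
Proof. induction m; simpl; auto. Qed.

Lemma cnt0 m : cnt m = 0 -> m = repeat false (length m).
Proof. induction m as [|[|] m IH]; simpl; intros; auto; [lia|]. f_equal; auto. Qed.

Lemma syl_detect n : n <> 0%Z -> exists m, 0 < m /\ Phi (embsyl (SA n)) (repeat false m) = true.
Proof.
  intros Hn. unfold embsyl. destruct (Z.ltb_spec 0 n).
  - exists (Z.to_nat n). split; [lia|]. apply An_spec.
  - set (k := Z.to_nat (- n)). assert (Hk : 0 < k) by lia.
    set (P := Phi (repeat (true,true) k)).
    apply NNPP. intros Hno.
    assert (HP : forall m, P m = one m).
    { intros m. destruct (Nat.eq_dec (cnt m) 0) as [C|C].
      - rewrite (cnt0 m C). destruct (length m) as [|j] eqn:L.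
        + apply Phi_const.
        + destruct (P (repeat false (S j))) eqn:E; [|reflexivity].
          exfalso. apply Hno. exists (S j). split; [lia|exact E].
      - unfold P. rewrite Phi_cnt. destruct m; [simpl in C; lia|reflexivity].
        rewrite nbw_repeat. lia. }
    pose proof (Phi_weq (repeat_cancel k) (valid_rep k valid_nil)) as E.
    rewrite app_nil_r in E. rewrite Phi_app in E.
    rewrite (mul_ext_pw _ _ (An k) _ one (fun _ => eq_refl) HP) in E.
    rewrite mul_one_r in E. rewrite (proj1 (An_spec k)) in E. destruct k; [lia|discriminate].
Qed.

Lemma detect : forall t, wf t -> exists M, Phi (embed t) M = true /\ valid M /\ cnt M = nb t /\
  (t <> [] -> M <> []) /\ (forall n r, t = SA n :: r -> exists M', M = false :: M') /\
  (forall r, t = SB :: r -> exists M', M = true :: M').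
Proof.
  induction t as [|[n|] r IH]; intros W.
  - exists []. split; [reflexivity|]. split; [apply valid_nil|]. split; [reflexivity|].
    split; [congruence|]. split; intros; discriminate.
  - destruct W as [Hn [Hr Wr]]. destruct (IH Wr) as [Mr [P1 [V1 [C1 [N1 [S1 S2]]]]]].
    destruct (syl_detect Hn) as [m [Hm Pm]].
    exists (repeat false m ++ Mr). 
    assert (Hx : forall q, 0 < cnt q -> Phi (embsyl (SA n)) q = false).
    { intros q Hq. apply Phi_cnt. rewrite nbw_embsyl. exact Hq. }
    repeat split.
    + cbn [embed flat_map]. fold (embed r). rewrite Phi_app.
      destruct r as [|[n'|] r'].
      * simpl in P1. destruct Mr; [|discriminate]. rewrite app_nil_r, mul_one_r. exact Pm.
      * destruct Hr.
      * destruct (S2 r' eq_refl) as [M' ->]. rewrite xblock; auto.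
        -- rewrite Pm. exact P1.
        -- intros j Hj. destruct j as [|j]; [lia|].
           change (embed (SB :: r')) with ((false,false) :: embed r'). rewrite Phi_cons.
           simpl repeat. simpl app. rewrite mul_cons.
           rewrite (@mul_zero _ (shift false B)). 2: { intros; reflexivity. }
           rewrite Phi_cnt. reflexivity.
           rewrite nbw_embed. simpl. rewrite cnt_app, cnt_rep. simpl in C1. simpl. lia.
    + now apply valid_rep.
    + rewrite cnt_app, cnt_rep. exact C1.
    + destruct m; [lia|]. simpl. discriminate.
    + intros n0 r0 _. destruct m; [lia|]. simpl. eauto.
    + intros r0 E; discriminate.
  - destruct W as [Hr Wr]. destruct (IH Wr) as [Mr [P1 [V1 [C1 [N1 [S1 S2]]]]]].
    exists (true :: Mr). repeat split.
    + change (embed (SB :: r)) with ((false,false) :: embed r). rewrite Phi_cons. rewrite mul_cons.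
      rewrite (Phi_cnt (embed r) (true :: Mr)). 2: { rewrite nbw_embed. simpl. lia. }
      rewrite andb_false_r. simpl xorb.
      rewrite (mul_ext_pw Mr (shift true B) one (Phi (embed r)) (Phi (embed r))). 2: { intros [|? ?]; reflexivity. } 2: reflexivity.
      now rewrite mul_one_l.
    + apply valid_cons_true; auto. destruct r as [|[n'|] r'].
      * destruct Mr as [|[|] Mr]; simpl in *; try congruence; lia.
      * destruct (S1 n' r' eq_refl) as [M' ->]. simpl. congruence.
      * destruct Hr.
    + simpl. now rewrite C1.
    + discriminate.
    + intros n0 r0 E; discriminate.
    + eauto.
Qed.

Lemma resid_ZZ2 : resid_nilp Z_free_Z2.
Proof.
  intros x H. change (weq ZZ2rel x []).
  assert (HS : seqv (Phi x) one) by (apply Phi_allGamma; exact H).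
  destruct (red_spec x) as [W E].
  destruct (red x) as [|s t] eqn:Er.
  - exact E.
  - exfalso. destruct (@detect _ W) as [M [P1 [V1 [_ [N1 _]]]]].
    assert (NM : M <> []) by (apply N1; discriminate).
    rewrite <- (Phi_weq E V1) in P1. rewrite (HS M V1) in P1.
    destruct M; [congruence|discriminate].
Qed.

Lemma idx_eq n (a b : idx n) : proj1_sig a = proj1_sig b -> a = b.
Proof.
  destruct a as [i [H1 H2]], b as [j [H3 H4]]; simpl. intros ->.
  f_equal. f_equal; apply Peano_dec.le_unique.
Qed.

Definition mkidx n i (H : 1 <= i < n) : idx n := exist _ i H.

Section VBs.
Variable n : nat.
Notation W := (word (VBgen n)).
Notation "u ≈ v" := (weq (@VBrel n) u v) (at level 70).
Notation cgk := (cg (@VBrel n)).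
Notation Gk := (Gm (@VBrel n)).

Lemma canc_at (A' B' : W) a b : A' ++ (a, b) :: (a, negb b) :: B' ≈ A' ++ B'.
Proof. apply weq_cat; [reflexivity|]. change ([(a,b);(a,negb b)] ++ B' ≈ [] ++ B'). apply weq_cat; [apply weq_free|reflexivity]. Qed.

Lemma rel_at (A' B' u v : W) : VBrel u v -> A' ++ u ++ B' ≈ A' ++ v ++ B'.
Proof. intros H. apply weq_cat; [reflexivity|]. apply weq_cat; [now apply weq_rel|reflexivity]. Qed.

Lemma rho2 a : [rh a; rh a] ≈ ([] : W).
Proof. apply weq_rel. do 4 right; left. eauto. Qed.

Lemma rho_inv a : [((false, a), true)] ≈ ([rh a] : W).
Proof.
  transitivity ([((false, a), true)] ++ [rh a; rh a]).
  - rewrite rho2. reflexivity.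
  - exact (canc_at [] [rh a] (false, a) true).
Qed.

Definition swp (i k : nat) : nat := if k =? i then S i else if k =? S i then i else k.
Definition hsw (l : VBgen n * bool) : nat -> nat := swp (proj1_sig (snd (fst l))).
Definition evs := ev (fun f g k => f (g k)) (fun k => k) hsw.

Ltac swp_solve := unfold swp; repeat (match goal with |- context [Nat.eqb ?a ?b] =>
   lazymatch a with context[if _ then _ else _] => fail | _ =>
   lazymatch b with context [if _ then _ else _] => fail | _ => destruct (Nat.eqb_spec a b) end end end;
   cbn beta iota); lia.

Lemma evs_weq u v : u ≈ v -> evs u = evs v.
Proof.
  apply ev_weq; try reflexivity.
  - intros [t a] b. apply functional_extensionality. intros k. unfold hsw. simpl. swp_solve.
  - intros u' v' H.
    destruct H as [[a [b [N [-> ->]]]]|[[a [b [N [-> ->]]]]|[[a [b [N [-> ->]]]]|[[a [b [N [-> ->]]]]|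
      [[a [-> ->]]|[[a [b [N [-> ->]]]]|[a [b [N [-> ->]]]]]]]]]];
    apply functional_extensionality; intros k; unfold evs, ev, hsw; simpl;
    unfold next, far in *; repeat match goal with x : idx n |- _ => destruct x as [? ?] end;
    simpl in *; swp_solve.
Qed.

End VBs.

Section Dpart.
Variable n : nat.
Hypothesis Hn : 3 <= n.
Notation W := (word (VBgen n)).
Notation "u ≈ v" := (weq (@VBrel n) u v) (at level 70).

Definition i1 : idx n := mkidx (i:=1) (conj (le_n 1) (ltac:(lia) : 1 < n)).
Definition i2 : idx n := mkidx (i:=2) (conj (le_S _ _ (le_n 1)) (ltac:(lia) : 2 < n)).

Definition x0 : W := [((true, i1), true); ((true, i2), false)].

Lemma braid12 : ([sg i1; sg i2; sg i1] : W) ≈ [sg i2; sg i1; sg i2].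
Proof. apply weq_rel. left. exists i1, i2. repeat split. Qed.

Lemma x0_id : x0 ≈ winv (wcomm (winv [sg i1] ++ x0 ++ [sg i1]) [sg i1]).
Proof.
  rewrite wcomm_winv. unfold wcomm, x0. cbn.
  symmetry.
  set (S := sg i1). set (T := sg i2). set (S' := ((true, i1), true)). set (T' := ((true, i2), true)).
  transitivity [S'; S'; T'; S; S; S'; T; S].
  { exact (canc_at [S'; S'; T'; S; S] [S'; T; S] (true, i1) false). }
  transitivity [S'; S'; T'; S; T; S].
  { exact (canc_at [S'; S'; T'; S] [T; S] (true, i1) false). }
  transitivity [S'; S'; T'; T; S; T].
  { apply rel_at with (A' := [S'; S'; T']) (B' := []) (u := [S; T; S]) (v := [T; S; T]). left. exists i1, i2. repeat split. }
  transitivity [S'; S'; S; T].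
  { exact (canc_at [S'; S'] [S; T] (true, i2) true). }
  exact (canc_at [S'] [T] (true, i1) true).
Qed.

Lemma x0_Gamma : forall k, Gm (@VBrel n) k x0.
Proof.
  induction k as [|k IH]; [exact I|].
  destruct k as [|k]; [exact I|].
  rewrite x0_id. apply Gm_winv. apply Gm_comm. apply Gm_conj. exact IH.
Qed.

Lemma x0_nontriv : ~ (x0 ≈ []).
Proof.
  intros H. apply evs_weq in H. apply (f_equal (fun f => f 2)) in H.
  unfold evs, ev, hsw, x0, i1, i2 in H. simpl in H. unfold swp in H. simpl in H. discriminate.
Qed.

Lemma not_resid : ~ resid_nilp (VB n).
Proof.
  intros H. apply x0_nontriv. apply (H x0). intros i _. apply x0_Gamma.
Qed.
End Dpart.

Section Bpart.
Variable n : nat.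
Hypothesis Hn : 2 <= n.
Notation W := (word (VBgen n)).
Notation "u ≈ v" := (weq (@VBrel n) u v) (at level 70).
Notation cg2 := (cg (@VBrel n) 2).
Notation cg3 := (cg (@VBrel n) 3).

Definition j1 : idx n := mkidx (i:=1) (conj (le_n 1) (ltac:(lia) : 1 < n)).

Definition hab (l : VBgen n * bool) : Z * bool :=
  match l with
  | ((true, _), false) => (1%Z, false)
  | ((true, _), true) => ((-1)%Z, false)
  | ((false, _), _) => (0%Z, true)
  end.
Definition zop (p q : Z * bool) : Z * bool := (fst p + fst q, xorb (snd p) (snd q))%Z.
Definition eva := ev zop (0%Z, false) hab.

Lemma zop_assoc a b c : zop a (zop b c) = zop (zop a b) c.
Proof. destruct a, b, c; unfold zop; simpl; f_equal; [lia|btauto]. Qed.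
Lemma zop_l a : zop (0%Z, false) a = a.
Proof. destruct a; reflexivity. Qed.
Lemma zop_r a : zop a (0%Z, false) = a.
Proof. destruct a; unfold zop; simpl; f_equal; [lia|btauto]. Qed.

Lemma eva_app u v : eva (u ++ v) = zop (eva u) (eva v).
Proof. apply ev_app; [apply zop_assoc|apply zop_l]. Qed.

Lemma eva_weq u v : u ≈ v -> eva u = eva v.
Proof.
  apply ev_weq; [apply zop_assoc|apply zop_l|apply zop_r| |].
  - intros [[|] a] [|]; reflexivity.
  - intros u' v' H.
    destruct H as [[a [b [N [-> ->]]]]|[[a [b [N [-> ->]]]]|[[a [b [N [-> ->]]]]|[[a [b [N [-> ->]]]]|
      [[a [-> ->]]|[[a [b [N [-> ->]]]]|[a [b [N [-> ->]]]]]]]]]]; reflexivity.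
Qed.

Lemma eva_winv u : eva (winv u) = (- fst (eva u), snd (eva u))%Z.
Proof.
  pose proof (eva_weq (winv_l _ u)) as E. rewrite eva_app in E.
  destruct (eva (winv u)) as [a b], (eva u) as [c d]. unfold zop in E; simpl in *.
  injection E as E1 E2. f_equal; [lia|]. destruct b, d; simpl in *; congruence.
Qed.

Lemma eva_G2 : forall u, Gm (@VBrel n) 2 u -> eva u = (0%Z, false).
Proof.
  intros u H. rewrite Gm_SS in H. revert u H.
  apply (@gen_indP _ _ (CS (@VBrel n) 1) (fun u => eva u = (0%Z, false))).
  - intros w [x [y [_ ->]]]. rewrite comm_P. unfold wcomm. rewrite !eva_app, !eva_winv.
    destruct (eva x) as [a b], (eva y) as [c d]. unfold zop; simpl. f_equal; [lia|btauto].
  - reflexivity.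
  - intros x y Hx Hy. now rewrite eva_app, Hx, Hy.
  - intros x Hx. now rewrite eva_winv, Hx.
  - intros x y Hxy Hx. now rewrite <- (eva_weq Hxy).
Qed.

Definition pw (z : Z) : W :=
  if Z.leb 0 z then repeat ((true, j1), false) (Z.to_nat z) else repeat ((true, j1), true) (Z.to_nat (- z)).
Definition nfw (p : Z * bool) : W := pw (fst p) ++ (if snd p then [rh j1] else []).

Lemma eva_rep b k : eva (repeat ((true, j1), b) k) = ((if b then - Z.of_nat k else Z.of_nat k)%Z, false).
Proof.
  induction k as [|k IH]; [destruct b; reflexivity|].
  simpl repeat. change (eva (((true,j1),b) :: repeat ((true,j1),b) k)) with (zop (hab ((true,j1),b)) (eva (repeat ((true,j1),b) k))).
  rewrite IH. destruct b; unfold zop, hab; cbn [fst snd xorb]; f_equal; lia.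
Qed.

Lemma eva_nfw p : eva (nfw p) = p.
Proof.
  destruct p as [z b]. unfold nfw, pw. simpl. rewrite eva_app.
  destruct (Z.leb_spec 0 z); rewrite eva_rep; destruct b; unfold zop; simpl; f_equal; lia.
Qed.

Lemma pw_succ z : ((true, j1), false) :: pw z ≈ pw (1 + z).
Proof.
  unfold pw. destruct (Z.leb_spec 0 z); destruct (Z.leb_spec 0 (1 + z)); try lia.
  - replace (Z.to_nat (1 + z)) with (S (Z.to_nat z)) by lia. reflexivity.
  - replace (Z.to_nat (- z)) with (S (Z.to_nat (- (1 + z)))) by lia.
    replace (Z.to_nat (1 + z)) with 0 by lia. 
    assert (Z.to_nat (- (1 + z)) = 0) as -> by lia. simpl.
    exact (canc_at [] [] (true, j1) false).
  - replace (Z.to_nat (- z)) with (S (Z.to_nat (- (1 + z)))) by lia. simpl repeat.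
    exact (canc_at [] _ (true, j1) false).
Qed.

Lemma pw_pred z : ((true, j1), true) :: pw z ≈ pw (-1 + z).
Proof.
  unfold pw. destruct (Z.leb_spec 0 z); destruct (Z.leb_spec 0 (-1 + z)); try lia.
  - replace (Z.to_nat z) with (S (Z.to_nat (-1 + z))) by lia. simpl repeat.
    exact (canc_at [] _ (true, j1) true).
  - assert (z = 0%Z) by lia. subst. simpl. reflexivity.
  - replace (Z.to_nat (- (-1 + z))) with (S (Z.to_nat (- z))) by lia. reflexivity.
Qed.

Lemma cg2_comm (x y : W) : cg2 (x ++ y) (y ++ x).
Proof.
  unfold cg. rewrite winv_app, <- app_assoc. change (Gm (@VBrel n) 2 (wcomm y x)).
  apply Gm_comm. exact I.
Qed.

Lemma sig_cg : forall i (H : 1 <= i < n), cg2 [sg (mkidx H)] [sg j1].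
Proof.
  induction i as [|i IH]; intros H; [lia|].
  destruct i as [|i].
  - rewrite (idx_eq (mkidx H) j1 eq_refl). reflexivity.
  - assert (H' : 1 <= S i < n) by lia. rewrite <- (IH H').
    set (a := mkidx H'). set (b := mkidx H).
    assert (Rel : [rh a; rh b] ++ [sg a] ≈ [sg b] ++ [rh a; rh b]).
    { apply weq_rel. do 6 right. exists a, b. repeat split. }
    apply cg_sym. apply (cg_lcancel (@VBrel n) 2 [rh a; rh b]).
    rewrite Rel. apply cg2_comm.
Qed.

Lemma rho_cg : forall i (H : 1 <= i < n), cg2 [rh (mkidx H)] [rh j1].
Proof.
  induction i as [|i IH]; intros H; [lia|].
  destruct i as [|i].
  - rewrite (idx_eq (mkidx H) j1 eq_refl). reflexivity.
  - assert (H' : 1 <= S i < n) by lia. rewrite <- (IH H').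
    set (a := mkidx H'). set (b := mkidx H).
    assert (Rel : [rh a] ++ [rh b; rh a] ≈ [rh b] ++ [rh a; rh b]).
    { apply weq_rel. do 2 right; left. exists a, b. repeat split. }
    assert (E1 : cg2 ([rh a] ++ [rh b; rh a]) [rh b]).
    { transitivity ([rh a] ++ [rh a; rh b]).
      - apply cg_l. apply (cg2_comm [rh b] [rh a]).
      - apply cg_weq. change ([rh a; rh a] ++ [rh b] ≈ [] ++ [rh b]). apply weq_cat; [apply rho2|reflexivity]. }
    assert (E2 : cg2 ([rh b] ++ [rh a; rh b]) [rh a]).
    { transitivity ([rh b] ++ [rh b; rh a]).
      - apply cg_l. apply (cg2_comm [rh a] [rh b]).
      - apply cg_weq. change ([rh b; rh b] ++ [rh a] ≈ [] ++ [rh a]). apply weq_cat; [apply rho2|reflexivity]. }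
    transitivity ([rh a] ++ [rh b; rh a]); [symmetry; exact E1|].
    transitivity ([rh b] ++ [rh a; rh b]); [now apply cg_weq|exact E2].
Qed.

Lemma idx_mk (a : idx n) : exists i (H : 1 <= i < n), a = mkidx H.
Proof. destruct a as [i H]. exists i, H. reflexivity. Qed.

Lemma letter_cg (l : VBgen n * bool) :
  cg2 [l] [sg j1] \/ cg2 [l] [((true, j1), true)] \/ cg2 [l] [rh j1].
Proof.
  destruct l as [[[|] a] e]; destruct (idx_mk a) as [i [H ->]].
  - destruct e.
    + right; left. apply (cg_winv (@VBrel n) 2 [sg (mkidx H)] [sg j1]). apply sig_cg.
    + left. apply sig_cg.
  - right; right. destruct e.
    + transitivity [rh (mkidx H)]; [apply cg_weq; apply rho_inv| apply rho_cg].
    + apply rho_cg.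
Qed.

Lemma nf_cg : forall w, cg2 w (nfw (eva w)).
Proof.
  induction w as [|l w IH]; [reflexivity|].
  change (l :: w) with ([l] ++ w). transitivity ([l] ++ nfw (eva w)); [apply cg_l; exact IH|].
  rewrite eva_app.
  destruct (eva w) as [z b]. unfold nfw; simpl fst; simpl snd.
  destruct l as [[[|] a] e]; destruct (idx_mk a) as [i [H ->]].
  - destruct e.
    + assert (C : cg2 [((true, mkidx H), true)] [((true, j1), true)]).
      { apply (cg_winv (@VBrel n) 2 [sg (mkidx H)] [sg j1]). apply sig_cg. }
      rewrite C. unfold zop, hab; cbn [fst snd xorb]. apply cg_weq. rewrite Z.add_0_r.
      rewrite <- pw_pred. reflexivity.
    + assert (C : cg2 [((true, mkidx H), false)] [((true, j1), false)]) by apply sig_cg.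
      rewrite C. unfold zop, hab; cbn [fst snd xorb]. apply cg_weq. rewrite Z.add_0_r.
      rewrite <- pw_succ. reflexivity.
  - assert (C : cg2 [((false, mkidx H), e)] [rh j1]).
    { destruct e; [transitivity [rh (mkidx H)]; [apply cg_weq; apply rho_inv|]|]; apply rho_cg. }
    rewrite C. unfold zop, hab; cbn [fst snd xorb]. replace (0 + 0 + z)%Z with z by lia.
    rewrite app_assoc. rewrite (cg2_comm [rh j1] (pw z)). rewrite <- app_assoc.
    apply cg_l. destruct b; simpl.
    + apply cg_weq. apply rho2.
    + reflexivity.
Qed.

Lemma partB : quot_iso (Gamma (VB n) 1) (Gamma (VB n) 2) Z_plus_Z2.
Proof.
  exists eva. split; [|split; [|split]].
  - intros x y _ _ H. change (Gm (@VBrel n) 2 (winv x ++ y)) in H.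
    apply eva_G2 in H. rewrite eva_app, eva_winv in H. simpl.
    destruct (eva x) as [a b], (eva y) as [c d]. unfold zop in H; simpl in H.
    injection H as H1 H2. f_equal; [lia|]. destruct b, d; simpl in *; congruence.
  - intros x y _ _. simpl. apply eva_app.
  - intros x y _ _ H. simpl in H. change (cg2 x y).
    rewrite (nf_cg x), (nf_cg y), H. reflexivity.
  - intros h. exists (nfw h). split; [exact I|]. simpl. apply eva_nfw.
Qed.

End Bpart.

Section GenC.
Variable X : Type.
Variable R : word X -> word X -> Prop.
Notation "u ≈ v" := (weq R u v) (at level 70).
Lemma wcomm_self (x : word X) : wcomm x x ≈ [].
Proof. unfold wcomm. rewrite (wc1 R x). apply wc1'. Qed.
Lemma wcomm_inv_r (x : word X) : wcomm x (winv x) ≈ [].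
Proof. unfold wcomm. rewrite winv_winv. rewrite (wc1 R x). apply wc0'. Qed.
Lemma wcomm_inv_l (x : word X) : wcomm (winv x) x ≈ [].
Proof. unfold wcomm. rewrite winv_winv. rewrite (wc0 R x). apply wc1'. Qed.
Lemma wcomm_nil_l (y : word X) : wcomm [] y ≈ [].
Proof. unfold wcomm. simpl. apply wc1'. Qed.
Lemma wcomm_nil_r (x : word X) : wcomm x [] ≈ [].
Proof. unfold wcomm. simpl. rewrite app_nil_r. apply wc1'. Qed.
Lemma C2 (x y : word X) : wcomm (winv x) y ≈ x ++ winv (wcomm x y) ++ winv x.
Proof.
  rewrite wcomm_winv. unfold wcomm. rewrite winv_winv. rewrite <- !app_assoc.
  rewrite (wc0' R x), app_nil_r. reflexivity.
Qed.
Global Instance cg_winv_proper k : Proper (cg R k ==> cg R k) (@winv X).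
Proof. intros a b H. now apply cg_winv. Qed.
End GenC.

Section Cpart.
Variable n : nat.
Hypothesis Hn : 2 <= n.
Notation W := (word (VBgen n)).
Notation "u ≈ v" := (weq (@VBrel n) u v) (at level 70).
Notation cg2 := (cg (@VBrel n) 2).
Notation cg3 := (cg (@VBrel n) 3).
Notation J := (j1 Hn).
Notation S := (((true, J), false) : VBgen n * bool).
Notation S' := (((true, J), true) : VBgen n * bool).
Notation P := (rh J).

Definition c0 : W := wcomm [S] [P].
Definition cpow (e : bool) : W := if e then c0 else [].

Lemma c0_G2 : Gm (@VBrel n) 2 c0.
Proof. apply Gm_comm. exact I. Qed.
Lemma cpow_G2 e : Gm (@VBrel n) 2 (cpow e).
Proof. destruct e; [apply c0_G2|apply Gm_nil]. Qed.

Lemma c0c0 : cg3 (c0 ++ c0) [].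
Proof.
  unfold c0. rewrite <- (T2c (@VBrel n) [S] [P] [P]).
  apply cg_weq. rewrite (wcomm_weq (reflexivity [S]) (rho2 J)). apply wcomm_nil_r.
Qed.

Lemma winv_c0 : cg3 (winv c0) c0.
Proof.
  transitivity (winv c0 ++ (c0 ++ c0)).
  - rewrite c0c0, app_nil_r. reflexivity.
  - apply cg_weq. apply wc1.
Qed.

Lemma cpow_mul e1 e2 : cg3 (cpow e1 ++ cpow e2) (cpow (xorb e1 e2)).
Proof. destruct e1, e2; simpl; try reflexivity; try apply c0c0; rewrite app_nil_r; reflexivity. Qed.

Lemma cpow_winv e : cg3 (winv (cpow e)) (cpow e).
Proof. destruct e; [apply winv_c0|reflexivity]. Qed.

Lemma base_comm (l m : VBgen n * bool) : In l [S; S'; P] -> In m [S; S'; P] ->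
  exists e, cg3 (wcomm [l] [m]) (cpow e).
Proof.
  assert (WS : winv [S] = [S']) by reflexivity.
  assert (E1 : cg3 (wcomm [S'] [P]) c0).
  { rewrite <- WS. rewrite C2. rewrite <- central'. apply winv_c0. apply Gm_winv, c0_G2. }
  intros Hl Hm. simpl in Hl, Hm.
  destruct Hl as [<-|[<-|[<-|[]]]]; destruct Hm as [<-|[<-|[<-|[]]]].
  - exists false. apply cg_weq. apply wcomm_self.
  - exists false. apply cg_weq. rewrite <- WS. apply wcomm_inv_r.
  - exists true. reflexivity.
  - exists false. apply cg_weq. rewrite <- WS. apply wcomm_inv_l.
  - exists false. apply cg_weq. apply wcomm_self.
  - exists true. exact E1.
  - exists true. simpl. rewrite <- wcomm_winv. fold c0. apply winv_c0.
  - exists true. simpl. rewrite <- wcomm_winv. rewrite E1. apply winv_c0.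
  - exists false. apply cg_weq. apply wcomm_self.
Qed.

Lemma letter_cls (l : VBgen n * bool) : exists l', In l' [S; S'; P] /\ cg2 [l] [l'].
Proof.
  destruct (letter_cg Hn l) as [H|[H|H]]; eexists; split; try eassumption; simpl; auto.
Qed.

Lemma comm_letter (l m : VBgen n * bool) : exists e, cg3 (wcomm [l] [m]) (cpow e).
Proof.
  destruct (letter_cls l) as [l' [Il Cl]], (letter_cls m) as [m' [Im Cm]].
  destruct (base_comm Il Im) as [e He]. exists e.
  rewrite (comm_cg_l [m] Cl). rewrite (comm_cg_r [l'] Cm). exact He.
Qed.

Lemma comm_word : forall x y : W, exists e, cg3 (wcomm x y) (cpow e).
Proof.
  assert (Hl : forall l (y : W), exists e, cg3 (wcomm [l] y) (cpow e)).
  { intros l y. induction y as [|m y [e IH]].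
    - exists false. apply cg_weq. apply wcomm_nil_r.
    - destruct (comm_letter l m) as [e' He']. exists (xorb e' e).
      change (m :: y) with ([m] ++ y). rewrite T2c, He', IH. apply cpow_mul. }
  induction x as [|l x IH]; intros y.
  - exists false. apply cg_weq. apply wcomm_nil_l.
  - destruct (Hl l y) as [e1 H1], (IH y) as [e2 H2]. exists (xorb e1 e2).
    change (l :: x) with ([l] ++ x). rewrite T1c, H1, H2. apply cpow_mul.
Qed.

Lemma G2_cpow : forall u, Gm (@VBrel n) 2 u -> exists e, cg3 u (cpow e).
Proof.
  intros u H. rewrite Gm_SS in H. revert u H.
  apply (@gen_indP _ _ (CS (@VBrel n) 1) (fun u => exists e, cg3 u (cpow e))).
  - intros w [x [y [_ ->]]]. rewrite comm_P. apply comm_word.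
  - exists false. reflexivity.
  - intros x y [e1 H1] [e2 H2]. exists (xorb e1 e2). rewrite H1, H2. apply cpow_mul.
  - intros x [e H]. exists e. rewrite (cg_winv _ _ _ _ H). apply cpow_winv.
  - intros x y Hxy [e H]. exists e. rewrite <- Hxy. exact H.
Qed.

End Cpart.

Section C4.
Variable n : nat.
Hypothesis H4 : 4 <= n.
Notation W := (word (VBgen n)).
Notation "u ≈ v" := (weq (@VBrel n) u v) (at level 70).
Notation cg2 := (cg (@VBrel n) 2).
Notation cg3 := (cg (@VBrel n) 3).

Let Hn2 : 2 <= n. Proof. lia. Qed.
Definition i3 : idx n := mkidx (i:=3) (conj (le_S _ _ (le_S _ _ (le_n 1))) (ltac:(lia) : 3 < n)).

Lemma c0_triv : cg3 (c0 Hn2) [].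
Proof.
  unfold c0.
  assert (C : cg2 [rh (j1 Hn2)] [rh i3]) by (symmetry; apply (rho_cg Hn2)).
  rewrite (comm_cg_r [((true, j1 Hn2), false)] C).
  apply cg_weq. unfold wcomm. cbn.
  transitivity [((true, j1 Hn2), true); ((false, i3), true); rh i3; ((true, j1 Hn2), false)].
  { apply rel_at with (A' := [((true, j1 Hn2), true); ((false, i3), true)]) (B' := [])
      (u := [sg (j1 Hn2); rh i3]) (v := [rh i3; sg (j1 Hn2)]).
    do 5 right; left. exists (j1 Hn2), i3. unfold far. simpl. split; [lia|split; reflexivity]. }
  transitivity [((true, j1 Hn2), true); ((true, j1 Hn2), false)].
  { exact (canc_at [((true, j1 Hn2), true)] [((true, j1 Hn2), false)] (false, i3) true). }
  exact (canc_at [] [] (true, j1 Hn2) true).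
Qed.

Lemma partC4 : forall x : VB n, Gamma (VB n) 2 x <-> Gamma (VB n) 3 x.
Proof.
  intros x. split; intros H.
  - change (Gm (@VBrel n) 2 x) in H. change (Gm (@VBrel n) 3 x).
    destruct (G2_cpow Hn2 H) as [e He].
    assert (E : cg3 x []) by (rewrite He; destruct e; [apply c0_triv|reflexivity]).
    apply (proj2 (cg_Gm_iff _ _ _ _ E)). apply Gm_nil.
  - now apply (Gm_dec (@VBrel n) 2).
Qed.
End C4.

(* ===== (c), n = 3 : Heisenberg-type quotient ===== *)
Definition H3 := (Z * bool * bool)%type.
Definition hop (p q : H3) : H3 :=
  match p, q with (a1, b1, c1), (a2, b2, c2) =>
    ((a1 + a2)%Z, xorb b1 b2, xorb (xorb c1 c2) (b1 && Z.odd a2)) end.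
Definition he : H3 := (0%Z, false, false).
Definition hinv (p : H3) : H3 := match p with (a, b, c) => ((- a)%Z, b, xorb c (b && Z.odd a)) end.
Definition hh (l : VBgen 3 * bool) : H3 :=
  match l with
  | ((true, _), false) => (1%Z, false, false)
  | ((true, _), true) => ((-1)%Z, false, false)
  | ((false, _), _) => (0%Z, true, false)
  end.
Definition evh := ev hop he hh.

Lemma hop_assoc a b c : hop a (hop b c) = hop (hop a b) c.
Proof.
  destruct a as [[a1 b1] c1], b as [[a2 b2] c2], c as [[a3 b3] c3]. unfold hop.
  f_equal; [f_equal; [lia|btauto]|]. rewrite Z.odd_add. btauto.
Qed.
Lemma hop_l a : hop he a = a.
Proof. destruct a as [[a b] c]. unfold hop, he. simpl. f_equal. destruct c; reflexivity. Qed.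
Lemma hop_r a : hop a he = a.
Proof. destruct a as [[a b] c]. unfold hop, he. simpl. f_equal; [f_equal; [lia|btauto]|btauto]. Qed.

Lemma evh_app u v : evh (u ++ v) = hop (evh u) (evh v).
Proof. apply ev_app; [apply hop_assoc|apply hop_l]. Qed.

Lemma evh_weq u v : weq (@VBrel 3) u v -> evh u = evh v.
Proof.
  apply ev_weq; [apply hop_assoc|apply hop_l|apply hop_r| |].
  - intros [[|] a] [|]; reflexivity.
  - intros u' v' H.
    destruct H as [[a [b [N [-> ->]]]]|[[a [b [N [-> ->]]]]|[[a [b [N [-> ->]]]]|[[a [b [N [-> ->]]]]|
      [[a [-> ->]]|[[a [b [N [-> ->]]]]|[a [b [N [-> ->]]]]]]]]]]; try reflexivity;
    exfalso; unfold far in N; destruct a as [i Hi], b as [j Hj]; simpl in N; lia.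
Qed.

Lemma hop_inv p q : hop p q = he -> p = hinv q.
Proof.
  destruct p as [[a b] c], q as [[a' b'] c']. unfold hop, he, hinv. intros E.
  injection E as E1 E2 E3. f_equal; [f_equal; [lia|]|].
  - destruct b, b'; simpl in *; congruence.
  - assert (b = b') by (destruct b, b'; simpl in *; congruence). subst b'.
    destruct c, c', b, (Z.odd a'); simpl in *; congruence.
Qed.

Lemma evh_winv u : evh (winv u) = hinv (evh u).
Proof. apply hop_inv. rewrite <- evh_app. apply (evh_weq (winv_l _ u)). Qed.

Lemma hcomm_gen p q : exists c, hop (hinv p) (hop (hinv q) (hop p q)) = (0%Z, false, c).
Proof.
  destruct p as [[a b] c], q as [[a' b'] c']. unfold hop, hinv. eexists. f_equal. f_equal; [lia|btauto].
Qed.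

Lemma hcomm_central c q : hop (hinv (0%Z, false, c)) (hop (hinv q) (hop (0%Z, false, c) q)) = he.
Proof.
  destruct q as [[a' b'] c']. unfold hop, hinv, he. simpl.
  rewrite ?Z.odd_add, ?Z.odd_opp. f_equal; [f_equal; [lia|btauto]|]. destruct c, c', b', (Z.odd a'); reflexivity.
Qed.

Lemma evh_G2 : forall u, Gm (@VBrel 3) 2 u -> exists c, evh u = (0%Z, false, c).
Proof.
  intros u H. rewrite Gm_SS in H. revert u H.
  apply (@gen_indP _ _ (CS (@VBrel 3) 1) (fun u => exists c, evh u = (0%Z, false, c))).
  - intros w [x [y [_ ->]]]. rewrite comm_P. unfold wcomm. rewrite !evh_app, !evh_winv.
    apply hcomm_gen.
  - exists false. reflexivity.
  - intros x y [c1 H1] [c2 H2]. exists (xorb c1 c2). rewrite evh_app, H1, H2. unfold hop; simpl. now rewrite xorb_false_r.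
  - intros x [c H1]. exists c. rewrite evh_winv, H1. unfold hinv. simpl. f_equal. btauto.
  - intros x y Hxy [c H1]. exists c. now rewrite <- (evh_weq Hxy).
Qed.

Lemma evh_G3 : forall u, Gm (@VBrel 3) 3 u -> evh u = he.
Proof.
  intros u H. rewrite Gm_SS in H. revert u H.
  apply (@gen_indP _ _ (CS (@VBrel 3) 2) (fun u => evh u = he)).
  - intros w [x [y [Hx ->]]]. rewrite comm_P. unfold wcomm. rewrite !evh_app, !evh_winv.
    destruct (evh_G2 Hx) as [c Hc]. rewrite Hc. apply hcomm_central.
  - reflexivity.
  - intros x y H1 H2. rewrite evh_app, H1, H2. reflexivity.
  - intros x H1. rewrite evh_winv, H1. reflexivity.
  - intros x y Hxy H1. now rewrite <- (evh_weq Hxy).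
Qed.

Lemma H23 : 2 <= 3. Proof. lia. Qed.

Lemma evh_cpow e : evh (cpow H23 e) = (0%Z, false, e).
Proof. destruct e; reflexivity. Qed.

Definition fc (w : word (VBgen 3)) : bool := snd (evh w).

Lemma fc_resp x y : Gm (@VBrel 3) 2 x -> Gm (@VBrel 3) 2 y -> Gm (@VBrel 3) 3 (winv x ++ y) -> fc x = fc y.
Proof.
  intros Hx Hy H. apply evh_G3 in H. rewrite evh_app, evh_winv in H.
  destruct (evh_G2 Hx) as [c1 E1], (evh_G2 Hy) as [c2 E2]. unfold fc. rewrite E1, E2.
  rewrite E1, E2 in H. unfold hop, hinv, he in H. simpl in H. injection H as H.
  destruct c1, c2; simpl in *; congruence.
Qed.

Lemma partC3 : quot_iso (Gamma (VB 3) 2) (Gamma (VB 3) 3) Z2.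
Proof.
  exists fc. split; [|split; [|split]].
  - intros x y Hx Hy H. simpl. now apply fc_resp.
  - intros x y Hx Hy. simpl. unfold fc. change (gmul x y) with (x ++ y). rewrite evh_app.
    destruct (evh_G2 Hx) as [c1 E1], (evh_G2 Hy) as [c2 E2]. rewrite E1, E2. simpl. btauto.
  - intros x y Hx Hy H. simpl in H.
    destruct (G2_cpow H23 Hx) as [e1 C1], (G2_cpow H23 Hy) as [e2 C2].
    assert (F1 : fc x = e1).
    { rewrite (fc_resp Hx (cpow_G2 H23 e1) C1). unfold fc. now rewrite evh_cpow. }
    assert (F2 : fc y = e2).
    { rewrite (fc_resp Hy (cpow_G2 H23 e2) C2). unfold fc. now rewrite evh_cpow. }
    change (cg (@VBrel 3) 3 x y). rewrite C1, C2. assert (e1 = e2) as -> by congruence. reflexivity.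
  - intros h. exists (cpow H23 h). split; [apply cpow_G2|]. simpl. unfold fc. now rewrite evh_cpow.
Qed.

Definition k1 : idx 2 := mkidx (i:=1) (conj (le_n 1) (le_n 2)).
Definition fa (w : word (VBgen 2)) : word bool := map (fun l => (fst (fst l), snd l)) w.
Definition ga (w : word bool) : word (VBgen 2) := map (fun l => ((fst l, k1), snd l)) w.

Lemma idx2 (a : idx 2) : a = k1.
Proof. apply idx_eq. destruct a as [i Hi]. simpl. lia. Qed.

Lemma fa_winv u : fa (winv u) = winv (fa u).
Proof. unfold fa, winv. rewrite map_rev, !map_map. reflexivity. Qed.

Lemma fa_weq u v : weq (@VBrel 2) u v -> weq ZZ2rel (fa u) (fa v).
Proof.
  intros H. induction H.
  - apply weq_refl.
  - now apply weq_sym.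
  - eapply weq_trans; eauto.
  - unfold fa. rewrite !map_app. now apply weq_cat.
  - apply weq_free.
  - destruct H as [[a [b [N [-> ->]]]]|[[a [b [N [-> ->]]]]|[[a [b [N [-> ->]]]]|[[a [b [N [-> ->]]]]|
      [[a [-> ->]]|[[a [b [N [-> ->]]]]|[a [b [N [-> ->]]]]]]]]]];
    try (exfalso; unfold far, next in N; destruct a as [i Hi], b as [j Hj]; simpl in N; lia).
    apply weq_rel. split; reflexivity.
Qed.

Lemma ga_weq u v : weq ZZ2rel u v -> weq (@VBrel 2) (ga u) (ga v).
Proof.
  intros H. induction H.
  - apply weq_refl.
  - now apply weq_sym.
  - eapply weq_trans; eauto.
  - unfold ga. rewrite !map_app. now apply weq_cat.
  - apply weq_free.
  - destruct H as [-> ->]. apply rho2.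
Qed.

Lemma gafa x : ga (fa x) = x.
Proof.
  unfold ga, fa. rewrite map_map. rewrite <- (map_id x) at 2. apply map_ext.
  intros [[t a] e]. simpl. now rewrite (idx2 a).
Qed.

Lemma faga y : fa (ga y) = y.
Proof.
  unfold ga, fa. rewrite map_map. rewrite <- (map_id y) at 2. apply map_ext.
  intros [t e]. reflexivity.
Qed.

Lemma iso2 : isomorphic (VB 2) Z_free_Z2.
Proof.
  exists fa, ga. split; [|split; [|split]].
  - split; [apply fa_weq|]. intros x y. simpl. unfold fa. rewrite map_app. apply weq_refl.
  - split; [apply ga_weq|]. intros x y. simpl. unfold ga. rewrite map_app. apply weq_refl.
  - intros x. simpl. rewrite gafa. apply weq_refl.
  - intros y. simpl. rewrite faga. apply weq_refl.
Qed.

Lemma Gm_fa : forall k x, Gm (@VBrel 2) k x -> Gm ZZ2rel k (fa x).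
Proof.
  induction k as [|k IH]; intros x H; [exact I|].
  destruct k as [|k]; [exact I|].
  rewrite Gm_SS in *. revert x H.
  apply (@gen_indP _ _ (CS (@VBrel 2) (S k)) (fun x => gen (G:=Presented ZZ2rel) (CS ZZ2rel (S k)) (fa x))).
  - intros w [x [y [Hx ->]]]. apply (gen_in (G:=Presented ZZ2rel)). exists (fa x), (fa y).
    split; [now apply IH|]. rewrite !comm_P. unfold wcomm, fa. rewrite !map_app. fold (fa x) (fa y).
    change (map (fun l : VBgen 2 * bool => (fst (fst l), snd l)) (winv x)) with (fa (winv x)).
    change (map (fun l : VBgen 2 * bool => (fst (fst l), snd l)) (winv y)) with (fa (winv y)).
    now rewrite !fa_winv.
  - apply gen_nil'.
  - intros x y Hx Hy. unfold fa. rewrite map_app. now apply gen_app'.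
  - intros x Hx. rewrite fa_winv. now apply gen_winv'.
  - intros x y Hxy Hx. apply gen_weq' with (fa x); auto. now apply fa_weq.
Qed.

Lemma resid_VB2 : resid_nilp (VB 2).
Proof.
  intros x H. change (weq (@VBrel 2) x []).
  assert (E : weq ZZ2rel (fa x) []).
  { apply resid_ZZ2. intros i Hi. apply Gm_fa. apply H. exact Hi. }
  apply ga_weq in E. rewrite gafa in E. exact E.
Qed.

Theorem proposition4p4 :
  (* (a) *)
  (isomorphic (VB 2) Z_free_Z2 /\ resid_nilp Z_free_Z2 /\ resid_nilp (VB 2)) /\
  (* (b) *)
  (forall n, 2 <= n ->
     quot_iso (Gamma (VB n) 1) (Gamma (VB n) 2) Z_plus_Z2) /\
  (* (c) *)
  (quot_iso (Gamma (VB 3) 2) (Gamma (VB 3) 3) Z2 /\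
   forall n, 4 <= n -> forall x : VB n, Gamma (VB n) 2 x <-> Gamma (VB n) 3 x) /\
  (* (d) *)
  (forall n, 3 <= n -> ~ resid_nilp (VB n)).
Proof.
  split; [split; [exact iso2|split; [exact resid_ZZ2|exact resid_VB2]]|].
  split; [intros n Hn; exact (partB Hn)|].
  split; [split; [exact partC3|intros n Hn; exact (partC4 Hn)]|].
  intros n Hn. exact (not_resid Hn).
Qed.
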